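(* Let $A$ be a complex unital semi-prime Banach algebra, let $J$ be a (two-sided) ideal of $A$, let $\pi:A\to A/J$ be the canonical projection, and let $\tau:J\to\mathbb{C}$ be a trace on $J$. Let $a\in A$ be a B-Fredholm element of $A$ modulo $J$. Then for every $a_0\in A$ such that $\pi(a_0)$ is the Drazin inverse of $\pi(a)$ in $A/J$, one has $aa_0-a_0a\in J$. Moreover, the number $\tau(aa_0-a_0a)$ is the same for all such $a_0$. Consequently the index $\mathbf{i}(a)=\tau(aa_0-a_0a)$ is well defined and independent of the choice of $a_0$.
   Context: A Banach algebra $A$ is semi-prime if, for $u\in A$, $uxu=0$ for all $x\in A$ implies $u=0$. A nonzero element $p$ of a semi-prime algebra $A$ has rank one if there is a linear functional $f_p$ on $A$ with $pxp=f_p(x)p$ for all $x\in A$. An element $x$ of an algebra $B$ is Drazin invertible if there exist $y\in B$ and $k\ge 1$ with $xy=yx$, $yxy=y$, and $x^kyx=x^k$; such $y$ is unique and is called the Drazin inverse of $x$. An element $a\in A$ is a B-Fredholm element of $A$ modulo $J$ if $\pi(a)$ is Drazin invertible in the quotient algebra $A/J$ (the quotient is not required to be a Banach algebra). A trace on $J$ is a function $\tau:J\to\mathbb{C}$ such that: (1) $\tau(p)=1$ for every idempotent $p\in J$ of rank one; (2) $\tau(a+b)=\tau(a)+\tau(b)$ for $a,b\in J$; (3) $\tau(\alpha a)=\alpha\tau(a)$ for $\alpha\in\mathbb{C}$, $a\in J$; (4) $\tau(ab)=\tau(ba)$ for all $a\in J$, $b\in A$. *)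

(* Defs.v *)
From HB Require Import structures.
From mathcomp Require Import all_boot all_order all_algebra.
From mathcomp Require Import reals.
From mathcomp Require Import complex.
Set Implicit Arguments. Unset Strict Implicit. Unset Printing Implicit Defensive.
Import Order.TTheory GRing.Theory Num.Theory.
Local Open Scope ring_scope.

Local Open Scope complex_scope.
Local Open Scope ring_scope.

Definition banach_algebra_norm (R : realType) (A : algType R[i])
    (nrm : A -> R) : Prop :=
  [/\ (forall x : A, 0 <= nrm x),
      (forall x : A, nrm x = 0 -> x = 0),
      (forall x y : A, nrm (x + y) <= nrm x + nrm y),
      (forall (c : R[i]) (x : A), (nrm (c *: x))%:C = `|c| * (nrm x)%:C) &
      ((forall x y : A, nrm (x * y) <= nrm x * nrm y) /\
      (forall u : nat -> A,
         (forall e : R, 0 < e -> exists N : nat, forall m n : nat,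
             (N <= m)%N -> (N <= n)%N -> nrm (u m - u n) < e) ->
         exists l : A, forall e : R, 0 < e -> exists N : nat, forall n : nat,
             (N <= n)%N -> nrm (u n - l) < e))].

Section Defs.
Variable K : fieldType.
Variable A : algType K.

Definition semi_prime : Prop :=
  forall u : A, (forall x : A, u * x * u = 0) -> u = 0.

Definition rank_one (p : A) : Prop :=
  p != 0 /\
  exists f : A -> K,
    (forall (c : K) (x y : A), f (c *: x + y) = c * f x + f y) /\
    (forall x : A, p * x * p = f x *: p).

Definition two_sided_ideal (J : {pred A}) : Prop :=
  [/\ 0 \in J,
      (forall x y, x \in J -> y \in J -> x + y \in J),
      (forall a x, x \in J -> a * x \in J) &
      (forall a x, x \in J -> x * a \in J)].

(* a trace on J (a function defined on J; values outside J are irrelevant) *)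
Definition trace_on (J : {pred A}) (tau : A -> K) : Prop :=
  [/\ (forall p, p \in J -> p * p = p -> rank_one p -> tau p = 1),
      (forall a b, a \in J -> b \in J -> tau (a + b) = tau a + tau b),
      (forall (al : K) a, a \in J -> tau (al *: a) = al * tau a) &
      (forall a b, a \in J -> tau (a * b) = tau (b * a))].

(* equality in the quotient algebra A/J: pi x = pi y  <->  x - y \in J *)
Definition eqmodJ (J : {pred A}) (x y : A) : Prop := x - y \in J.

Definition drazin_inv_mod (J : {pred A}) (x y : A) : Prop :=
  exists k : nat, (1 <= k)%N /\
    [/\ eqmodJ J (x * y) (y * x),
        eqmodJ J (y * x * y) y &
        eqmodJ J (x ^+ k * y * x) (x ^+ k)].

Definition B_Fredholm_mod (J : {pred A}) (a : A) : Prop :=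
  exists y : A, drazin_inv_mod J a y.

End Defs.

(* Main.v *)
Require Import Defs.
From HB Require Import structures.
From mathcomp Require Import all_boot all_order all_algebra.
From mathcomp Require Import reals.
From mathcomp Require Import complex.
From Stdlib Require Import Setoid Morphisms.
Import GRing.Theory Num.Theory.
Set Implicit Arguments. Unset Strict Implicit.
Local Open Scope ring_scope.

Section Cong.
Variables (K : fieldType) (A : algType K) (J : {pred A}).
Hypothesis HJ : two_sided_ideal J.

Definition eqJ (x y : A) : Prop := x - y \in J.

Lemma JN x : x \in J -> - x \in J.
Proof. case: HJ => _ _ HL _ h; rewrite -mulN1r; exact: HL. Qed.
Lemma JD x y : x \in J -> y \in J -> x + y \in J.
Proof. by case: HJ => _ HD _ _; apply: HD. Qed.

Lemma eqJ_refl x : eqJ x x. Proof. by rewrite /eqJ subrr; case: HJ. Qed.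
Lemma eqJ_sym x y : eqJ x y -> eqJ y x.
Proof. by rewrite /eqJ => h; rewrite -opprB; apply: JN. Qed.
Lemma eqJ_trans x y z : eqJ x y -> eqJ y z -> eqJ x z.
Proof.
by rewrite /eqJ => h1 h2; have := JD h1 h2; rewrite addrA subrK.
Qed.

#[local] Hint Resolve eqJ_refl : core.
Add Parametric Relation : A eqJ
  reflexivity proved by eqJ_refl
  symmetry proved by eqJ_sym
  transitivity proved by eqJ_trans as eqJ_rel.

Add Parametric Morphism : (@GRing.mul A) with signature
  eqJ ==> eqJ ==> eqJ as mul_mor.
Proof.
move=> x x' hx y y' hy; rewrite /eqJ.
have -> : x * y - x' * y' = (x - x') * y + x' * (y - y').
  by rewrite mulrBl mulrBr addrA subrK.
case: HJ => _ HD HL HR; apply: HD; [exact: HR | exact: HL].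
Qed.

Add Parametric Morphism : (@GRing.exp A) with signature
  eqJ ==> eq ==> eqJ as exp_mor.
Proof.
move=> x y h n; elim: n => [|n IH]; first by rewrite !expr0.
by rewrite !exprS; apply: mul_mor.
Qed.

Lemma G1 u v n : eqJ (u * v) (v * u) -> eqJ (u ^+ n * v) (v * u ^+ n).
Proof.
move=> h; elim: n => [|n IH]; first by rewrite expr0 mul1r mulr1.
by rewrite exprSr -mulrA h mulrA IH -mulrA -exprSr.
Qed.

Lemma G2 u v n : eqJ (u * v) (v * u) -> eqJ ((u * v) ^+ n) (u ^+ n * v ^+ n).
Proof.
move=> h; elim: n => [|n IH]; first by rewrite !expr0 mul1r.
rewrite exprSr IH -mulrA (mulrA (v ^+ n)).
have h' : eqJ (v ^+ n * u) (u * v ^+ n).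
  by apply: G1; symmetry.
by rewrite h' -!mulrA mulrA -exprSr -exprSr.
Qed.

Lemma G3 e n : eqJ (e * e) e -> eqJ (e ^+ n.+1) e.
Proof.
move=> h; elim: n => [|n IH]; first by rewrite expr1.
by rewrite exprSr IH h.
Qed.

Section Drazin.
Variables (x y : A) (m : nat).
Hypotheses (m1 : (1 <= m)%N) (h1 : eqJ (x * y) (y * x)) (h2 : eqJ (y * x * y) y)
  (h3 : eqJ (x ^+ m * y * x) (x ^+ m)).

Lemma D_pow : eqJ (x * y) (x ^+ m * y ^+ m).
Proof.
case: m m1 h3 => // n _ _.
rewrite -G2 // G3 //.
by rewrite -mulrA (mulrA y) h2.
Qed.

Lemma D_pow' : eqJ (x * y) (y ^+ m * x ^+ m).
Proof.
case: m m1 h3 => // n _ _.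
rewrite h1 -G2; last by symmetry.
rewrite G3 //.
by rewrite mulrA h2.
Qed.

Lemma D_left : eqJ (x ^+ m * (x * y)) (x ^+ m).
Proof. by rewrite h1 mulrA h3. Qed.

Lemma D_right : eqJ ((x * y) * x ^+ m) (x ^+ m).
Proof.
by rewrite -mulrA -(G1 _ h1) mulrA -exprS exprSr -mulrA h1 mulrA h3.
Qed.
End Drazin.

Lemma drazin_unique x y z m :
  (1 <= m)%N ->
  eqJ (x * y) (y * x) -> eqJ (y * x * y) y -> eqJ (x ^+ m * y * x) (x ^+ m) ->
  eqJ (x * z) (z * x) -> eqJ (z * x * z) z -> eqJ (x ^+ m * z * x) (x ^+ m) ->
  eqJ y z.
Proof.
move=> m1 a1 a2 a3 b1 b2 b3.
have pq : eqJ (x * y) (x * z).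
  transitivity ((x * z) * (x * y)).
    rewrite {2}(D_pow m1 a1 a2 a3) mulrA D_right //.
    by apply: D_pow.
  rewrite {1}(D_pow' m1 b1 b2 b3) -mulrA D_left //.
  by symmetry; apply: D_pow'.
by rewrite -{1}a2 -mulrA pq mulrA -a1 pq b1 b2.
Qed.
End Cong.

Lemma zid (V : zmodType) (p q r s : V) : p - q = (r - s) + ((p - r) + - (q - s)).
Proof. by rewrite opprB addrACA addKr addrCA subrr addr0. Qed.

Lemma lift_pow (K : fieldType) (A : algType K) (J : {pred A}) :
  two_sided_ideal J -> forall (x y : A) j k,
  eqJ J (x ^+ k * y * x) (x ^+ k) -> eqJ J (x ^+ (j + k) * y * x) (x ^+ (j + k)).
Proof.
move=> HJ x y j k h; rewrite /eqJ exprD -!mulrA -mulrBr.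
case: HJ => _ _ HL _; apply: HL; by rewrite !mulrA.
Qed.

Theorem theorem2p3 (R : realType) (A : algType R[i]) (nrm : A -> R)
  (J : {pred A}) (tau : A -> R[i]) :
  banach_algebra_norm nrm ->
  semi_prime A ->
  two_sided_ideal J ->
  trace_on J tau ->
  forall a : A, B_Fredholm_mod J a ->
  (forall a0 : A, drazin_inv_mod J a a0 -> a * a0 - a0 * a \in J) /\
  (forall a0 a1 : A, drazin_inv_mod J a a0 -> drazin_inv_mod J a a1 ->
     tau (a * a0 - a0 * a) = tau (a * a1 - a1 * a)).
Proof.
move=> _ _ HJ [_ tD tZ tC] a _; split.
  by move=> a0 [k [_ [h _ _]]].
move=> a0 a1 [k [k1 [b1 b2 b3]]] [l [l1 [c1 c2 c3]]].
have d : eqJ J a0 a1.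
  apply: (drazin_unique HJ (m := l + k)).
  - by rewrite addn_gt0 k1 orbT.
  - exact: b1.
  - exact: b2.
  - exact: lift_pow.
  - exact: c1.
  - exact: c2.
  - rewrite addnC; exact: lift_pow.
move: d; rewrite /eqJ => d.
have -> : a * a0 - a0 * a = (a * a1 - a1 * a) + (a * (a0 - a1) + - ((a0 - a1) * a)).
  by rewrite mulrBr mulrBl; apply: zid.
case: (HJ) => H0 HD HL HR.
have i1 : a * (a0 - a1) \in J by exact: HL.
have i2 : - ((a0 - a1) * a) \in J by apply: (JN HJ); exact: HR.
rewrite tD //; last exact: HD.
rewrite (tD (a * (a0 - a1))) // -(scaleN1r ((a0 - a1) * a)) tZ; last exact: HR.
by rewrite -(tC (a0 - a1) a) // mulN1r subrr addr0.
Qed.
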